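(* Let $m\ge 3$ and $H=\Theta(l_1,\ldots,l_m)$ with $l_1\ge 2$ and $l_2\ge 4$, and let $G=H^2$. Then $G$ is equitably $k$-choosable for every $k\ge 2m+2$.
   Context: All graphs are finite and simple. $\Theta(l_1,\ldots,l_m)$, with $l_1\le\cdots\le l_m$, denotes the graph consisting of two vertices $u,w$ joined by $m$ internally disjoint paths of lengths $l_1,\ldots,l_m$; the $i$th path is $u, v_{i,1},\ldots,v_{i,l_i-1}, w$. For a graph $H$, $H^2$ has vertex set $V(H)$ with two vertices adjacent iff their distance in $H$ is 1 or 2. A $k$-assignment $L$ assigns to each vertex a set of exactly $k$ colors; an equitable $L$-coloring of $G$ is a proper coloring $f$ with $f(v)\in L(v)$ such that no color is used more than $\lceil |V(G)|/k\rceil$ times; $G$ is equitably $k$-choosable if it has an equitable $L$-coloring for every $k$-assignment $L$. *)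

(* Defs.v *)
From mathcomp Require Import all_boot.
Set Implicit Arguments. Unset Strict Implicit. Unset Printing Implicit Defensive.

(* Vertex type of Theta(l_1,...,l_m), where l = [:: l_1; ...; l_m] (0-indexed).
   inl true = u, inl false = w, inr (Tagged i j) = v_{i+1, j+1}  (j < l_i - 1). *)
Definition theta_vertex (l : seq nat) : finType :=
  (bool + {i : 'I_(size l) & 'I_(nth 0 l i).-1})%type.

(* position of vertex x on the i-th path (u at 0, v_{i,j} at j, w at l_i),
   None if x is not on that path *)
Definition theta_pos (l : seq nat) (i : 'I_(size l)) (x : theta_vertex l)
  : option nat :=
  match x with
  | inl true => Some 0
  | inl false => Some (nth 0 l i)
  | inr t => if tag t == i then Some (tagged t).+1 else None
  end.

Definition theta_adj (l : seq nat) : rel (theta_vertex l) :=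
  fun x y => [exists i : 'I_(size l),
    match theta_pos i x, theta_pos i y with
    | Some a, Some b => (a.+1 == b) || (b.+1 == a)
    | _, _ => false
    end].

Definition graph_square (T : finType) (e : rel T) : rel T :=
  fun x y => (x != y) && (e x y || [exists z, e x z && e z y]).

Definition k_assignment (T : finType) (k : nat) (L : T -> seq nat) : Prop :=
  forall v, uniq (L v) /\ size (L v) = k.

Definition ceil_div (n k : nat) : nat := (n + k.-1) %/ k.

Definition equitable_L_coloring (T : finType) (e : rel T) (k : nat)
  (L : T -> seq nat) (f : T -> nat) : Prop :=
  [/\ forall v, f v \in L v,
      forall x y, e x y -> f x != f y &
      forall c : nat, #|[pred v | f v == c]| <= ceil_div #|T| k].

Definition equitably_k_choosable (T : finType) (e : rel T) (k : nat) : Prop :=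
  forall L : T -> seq nat, k_assignment k L ->
    exists f : T -> nat, equitable_L_coloring e k L f.

(* Main.v *)
Require Import Defs.
From mathcomp Require Import all_boot zify.
Set Implicit Arguments. Unset Strict Implicit. Unset Printing Implicit Defensive.

Lemma card_inj_le (T : finType) (A : {pred T}) (f : T -> nat) (s : seq nat) :
  {in A &, injective f} -> (forall x, x \in A -> f x \in s) -> #|A| <= size s.
Proof.
move=> finj fs; rewrite cardE -(size_map f).
apply: uniq_leq_size.
  by rewrite map_inj_in_uniq ?enum_uniq // => x y; rewrite !mem_enum; exact: finj.
by move=> _ /mapP [x Hx ->]; apply: fs; rewrite -mem_enum.
Qed.

Lemma card_sub (T : finType) (A B : pred T) :
  (forall y, A y -> B y) -> #|A| <= #|B|.
Proof. by move=> H; apply: subset_leq_card; apply/subsetP => y; exact: H. Qed.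

Section GL.
Variables (T : finType) (e : rel T) (k : nat) (P : T -> nat).
Hypotheses (k_gt0 : 0 < k) (esym : forall x y, e x y -> e y x)
  (eirr : forall x, ~~ e x x)
  (Pinj : injective P) (Ppos : forall x, 0 < P x) (Ple : forall x, P x <= #|T|).
Definition blk x := (P x).-1 %/ k.
Definition Bnd x := k * (blk x).+1.
Hypothesis Hcond : forall x, #|[pred y | e x y & Bnd x < P y]| + (Bnd x - P x) < k.

Lemma blk_mono x y : P x < P y -> blk x <= blk y.
Proof. by move=> H; rewrite /blk; apply: leq_div2r; lia. Qed.

Lemma blk_lt x y : (blk x < blk y) = (Bnd x < P y).
Proof.
rewrite /Bnd /blk leq_divRL // mulnC.
have := Ppos y; lia.
Qed.

Lemma P_le_Bnd x : P x <= Bnd x.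
Proof.
have := ltn_ceil (P x).-1 k_gt0; rewrite /Bnd /blk mulnC.
have := Ppos x; lia.
Qed.

Lemma same_blk_card x :
  #|[pred y | (blk y == blk x) && (P x < P y)]| <= Bnd x - P x.
Proof.
rewrite -(size_iota (P x).+1 (Bnd x - P x)).
apply: (card_inj_le (f := fun y => P y)); first by move=> a b _ _; exact: Pinj.
move=> y; rewrite inE => /andP [/eqP Hb Hlt]; rewrite mem_iota.
have := P_le_Bnd y; rewrite /Bnd Hb -/(Bnd x); lia.
Qed.

Variable L : T -> seq nat.
Hypothesis HL : k_assignment k L.

Let n := #|T|.

Definition valid (f : T -> nat) d :=
  (forall x, n < P x + d -> f x \in L x) /\
  (forall x y, n < P x + d -> n < P y + d -> x != y ->
      e x y || (blk x == blk y) -> f x != f y).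

Lemma valid_ex d : exists f, valid f d.
Proof.
elim: d => [|d [f [Hf1 Hf2]]].
  by exists (fun _ => 0); split => [x|x y]; rewrite addn0 ltnNge Ple.
case: (pickP [pred x | P x + d == n]) => [x0 /eqP Hx0 | Hnone]; last first.
  have Hold z : n < P z + d.+1 -> n < P z + d.
    move=> H; have := Hnone z; rewrite /= => /negbT; rewrite addnS in H; lia.
  exists f; split => [x Hx|x y Hx Hy]; [exact: Hf1 (Hold _ Hx)|exact: Hf2 (Hold _ Hx) (Hold _ Hy)].
pose A := [pred y | (n < P y + d) && (e x0 y || (blk x0 == blk y))].
pose forb := [seq f y | y <- enum A].
have HA : #|A| < k.
  apply: leq_ltn_trans (Hcond x0).
  apply: leq_trans (leq_add (leqnn _) (same_blk_card x0)).
  rewrite -cardUI; apply: leq_trans (leq_addr _ _); apply: card_sub => y.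
  rewrite /= => /andP [Hy /orP [He|Hb]]; apply/orP.
    have Hlt : P x0 < P y by lia.
    case: (ltnP (blk x0) (blk y)) => Hb.
      by left; rewrite inE He -blk_lt.
    by right; rewrite inE eqn_leq Hb blk_mono.
  by right; rewrite inE eq_sym Hb; lia.
have [HLu HLs] := HL x0.
have : ~~ all (mem forb) (L x0).
  apply/negP => Hall.
  have := uniq_leq_size HLu (fun c Hc => allP Hall c Hc).
  have HA2 : size (enum A) < k by rewrite -cardE. by rewrite size_map HLs => H; move: (leq_ltn_trans H HA2); rewrite ltnn.
case/allPn => c Hc Hcf.
have Hnew z : n < P z + d.+1 -> (z = x0) \/ (n < P z + d).
  move=> H; case: (eqVneq z x0) => [->|Hz]; first by left.
  right; rewrite addnS in H.
  case: (ltngtP n (P z + d)) => // H2; try lia.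
  have E : P z = P x0 by lia. by rewrite (Pinj E) eqxx in Hz.
have Hforb y : n < P y + d -> e x0 y || (blk x0 == blk y) -> f y \in forb.
  by move=> H1 H2; apply/mapP; exists y => //; rewrite mem_enum inE H1.
exists (fun z => if z == x0 then c else f z); split.
  move=> x Hx; case: (eqVneq x x0) => [->|Hne]; first by [].
  by case: (Hnew _ Hx) => // H; [rewrite H eqxx in Hne | exact: Hf1].
move=> x y Hx Hy Hxy Hexy.
case: (eqVneq x x0) => [Ex|Nx]; case: (eqVneq y x0) => [Ey|Ny].
- by rewrite Ex Ey eqxx in Hxy.
- subst x; case: (Hnew _ Hy) => [Ey|Hy']; first by rewrite Ey eqxx in Ny.
  apply/negP => /eqP Hc'; move/negP: Hcf; apply; rewrite Hc'; exact: (Hforb _ Hy' Hexy).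
- subst y; case: (Hnew _ Hx) => [Ex|Hx']; first by rewrite Ex eqxx in Nx.
  apply/negP => /eqP Hc'; move/negP: Hcf; apply; rewrite -Hc'; apply: (Hforb _ Hx').
  by case/orP: Hexy => [/esym ->|]; rewrite ?orbT // eq_sym => ->; rewrite orbT.
- case: (Hnew _ Hx) => [Ex|Hx']; first by rewrite Ex eqxx in Nx.
  case: (Hnew _ Hy) => [Ey|Hy']; first by rewrite Ey eqxx in Ny.
  exact: Hf2.
Qed.

Lemma GL_col : exists f, equitable_L_coloring e k L f.
Proof.
have [f [Hf1 Hf2]] := valid_ex n.
have Hall x : n < P x + n by have := Ppos x; lia.
exists f; split.
- by move=> v; apply: Hf1.
- move=> x y Hxy; apply: Hf2 => //; last by rewrite Hxy.
  by apply/eqP => E; subst y; move: (eirr x); rewrite Hxy.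
- move=> c; rewrite /ceil_div -/n.
  rewrite -(size_iota 0 ((n + k.-1) %/ k)).
  apply: (card_inj_le (f := blk)).
    move=> x y; rewrite !inE => /eqP Hx /eqP Hy Hb; case: (eqVneq x y) => // Hne.
    have := Hf2 x y (Hall x) (Hall y) Hne; rewrite Hb eqxx orbT Hx Hy eqxx.
    by move=> /(_ isT).
  move=> x _; rewrite mem_iota /= add0n leq_divRL // /blk.
  have := leq_trunc_div (P x).-1 k; have := Ple x; have := Ppos x.
  rewrite -/n; nia.
Qed.

End GL.

Lemma GL_main (T : finType) (e : rel T) (k : nat) (P : T -> nat) :
  0 < k -> (forall x y, e x y -> e y x) -> (forall x, ~~ e x x) ->
  injective P -> (forall x, 0 < P x) -> (forall x, P x <= #|T|) ->
  (forall x, #|[pred y | e x y & Bnd k P x < P y]| + (Bnd k P x - P x) < k) ->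
  equitably_k_choosable e k.
Proof. move=> kp es ei Pi Pp Pl Hc L HL; exact: (GL_col kp es ei Pi Pp Pl Hc HL). Qed.


Section Theta.
Variables (l : seq nat) (k : nat).
Hypotheses (Hm : 3 <= size l) (Hs : sorted leq l) (H0 : 2 <= nth 0 l 0)
  (H1 : 4 <= nth 0 l 1) (Hk : 2 * size l + 2 <= k).
Local Notation m := (size l).
Local Notation L i := (nth 0 l i).

Lemma Lmono i j : i <= j -> j < m -> L i <= L j.
Proof.
move=> Hij Hj; apply: (sorted_leq_nth leq_trans leqnn 0 Hs) => //.
  by rewrite inE; lia.
Qed.

Lemma Lge2 i : i < m -> 2 <= L i.
Proof. by move=> Hi; apply: leq_trans H0 (Lmono _ Hi). Qed.

Lemma Lge4 i : 0 < i -> i < m -> 4 <= L i.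
Proof. by move=> Hi0 Hi; apply: leq_trans H1 (Lmono Hi0 Hi). Qed.

Definition cnt c := count (fun a => c <= a) l.
Definition rk c i := count (fun a => c <= a) (drop i l).
Definition bl a := a - 5.
Definition pre i := sumn (map bl (take i l)).
Definition NN := sumn (map bl l).
Definition u2 := cnt 3.
Definition w1 := cnt 4.
Definition w2 := cnt 5.
Definition Pw := m + 2 + u2.
Definition g1 := minn (k - Pw) NN.
Definition ss := NN - g1.
Definition Pb := Pw + g1 + w1 + w2.

Definition Pint (i p : nat) : nat :=
  if p == 1 then 1 + (m - i)
  else if p == 2 then 1 + m + rk 3 i
  else if p.+1 == L i then Pw + g1 + rk 4 i
  else if p.+2 == L i then Pw + g1 + w1 + rk 5 i
  else if ss <= pre i + (p - 3) then Pw + (NN - (pre i + (p - 3)))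
  else Pb + (ss - (pre i + (p - 3))).

Definition PP (x : theta_vertex l) : nat :=
  match x with
  | inl b => if b then 1 else Pw
  | inr t => Pint (tag t) (tagged t).+1
  end.

Lemma rk_le c i : rk c i <= cnt c.
Proof.
rewrite /rk /cnt -{2}(cat_take_drop i l) count_cat; lia.
Qed.

Lemma rk_S c i : i < m -> rk c i = (c <= L i) + rk c i.+1.
Proof. by move=> Hi; rewrite /rk (drop_nth 0 Hi). Qed.

Lemma rk_pos c i : i < m -> c <= L i -> 0 < rk c i.
Proof. by move=> Hi Hc; rewrite rk_S // Hc. Qed.

Lemma rk_anti c i j : i <= j -> rk c j <= rk c i.
Proof.
move=> Hij; rewrite /rk -(subnKC Hij) addnC -drop_drop.
rewrite -{2}(cat_take_drop (j - i) (drop i l)) count_cat; lia.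
Qed.

Lemma rk_inj c i j : i < j -> j < m -> c <= L i -> rk c j < rk c i.
Proof.
move=> Hij Hj Hc; rewrite (rk_S c (ltn_trans Hij Hj)) Hc.
have := rk_anti c Hij; lia.
Qed.

Lemma cnt_le c : cnt c <= m.
Proof. exact: count_size. Qed.

Lemma cnt_anti c d : c <= d -> cnt d <= cnt c.
Proof. by move=> H; apply: sub_count => a /= Ha; lia. Qed.

Lemma pre_S i : i < m -> pre i.+1 = pre i + bl (L i).
Proof. by move=> Hi; rewrite /pre (take_nth 0 Hi) -cats1 map_cat sumn_cat /= addn0. Qed.

Lemma pre_mono i j : i <= j -> pre i <= pre j.
Proof.
move=> Hij; rewrite /pre -(subnKC Hij) takeD map_cat sumn_cat; lia.
Qed.

Lemma pre_NN i : pre i <= NN.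
Proof.
case: (leqP i m) => Hi; last by rewrite /pre take_oversize //; lia.
by rewrite /NN -(take_size l) -/(pre m); apply: pre_mono.
Qed.

Lemma pre_m : pre m = NN.
Proof. by rewrite /pre take_size. Qed.


Lemma beta_lt i p : i < m -> 3 <= p -> p + 3 <= L i -> pre i + (p - 3) < pre i.+1.
Proof. by move=> Hi Hp HL; rewrite pre_S // /bl; lia. Qed.

Lemma beta_NN i p : i < m -> 3 <= p -> p + 3 <= L i -> pre i + (p - 3) < NN.
Proof. by move=> Hi Hp HL; apply: leq_trans (beta_lt Hi Hp HL) (pre_NN _). Qed.

Lemma beta_inj i p i' p' : i < m -> 3 <= p -> p + 3 <= L i ->
  i' < m -> 3 <= p' -> p' + 3 <= L i' ->
  pre i + (p - 3) = pre i' + (p' - 3) -> i = i' /\ p = p'.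
Proof.
move=> Hi Hp HL Hi' Hp' HL' E.
case: (ltngtP i i') => Hii.
- have := beta_lt Hi Hp HL; have := pre_mono Hii; lia.
- have := beta_lt Hi' Hp' HL'; have := pre_mono Hii; lia.
- by subst i'; split => //; lia.
Qed.

Inductive pcls (i p : nat) : nat -> Prop :=
| C1 of p = 1 : pcls i p (1 + (m - i))
| C2 of p = 2 & 3 <= L i & 0 < rk 3 i & rk 3 i <= u2 : pcls i p (1 + m + rk 3 i)
| C3 of 3 <= p & p.+1 = L i & 0 < rk 4 i & rk 4 i <= w1 : pcls i p (Pw + g1 + rk 4 i)
| C4 of 3 <= p & p.+2 = L i & 0 < rk 5 i & rk 5 i <= w2 : pcls i p (Pw + g1 + w1 + rk 5 i)
| C5 of 3 <= p & p + 3 <= L i & ss <= pre i + (p - 3) & pre i + (p - 3) < NN :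
    pcls i p (Pw + (NN - (pre i + (p - 3))))
| C6 of 3 <= p & p + 3 <= L i & pre i + (p - 3) < ss :
    pcls i p (Pb + (ss - (pre i + (p - 3)))).

Lemma PintP i p : i < m -> 0 < p < L i -> pcls i p (Pint i p).
Proof.
move=> Hi /andP [Hp0 HpL]; rewrite /Pint.
case: eqP => [E1|N1]; first exact: C1.
case: eqP => [E2|N2].
  by apply: C2 => //; [lia | apply: rk_pos => //; lia | apply: rk_le].
case: eqP => [E3|N3].
  by apply: C3 => //; [lia | apply: rk_pos => //; lia | apply: rk_le].
case: eqP => [E4|N4].
  by apply: C4 => //; [lia | apply: rk_pos => //; lia | apply: rk_le].
have Hp3 : 3 <= p by lia.
have HL3 : p + 3 <= L i by lia.
case: leqP => Hs'.
  by apply: C5 => //; apply: beta_NN.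
by apply: C6.
Qed.

Lemma rk_eq c i j : i < m -> j < m -> c <= L i -> c <= L j -> rk c i = rk c j -> i = j.
Proof.
move=> Hi Hj Hci Hcj E; case: (ltngtP i j) => // Hij.
- by have := rk_inj Hij Hj Hci; lia.
- by have := rk_inj Hij Hi Hcj; lia.
Qed.

Lemma u2_le : u2 <= m. Proof. exact: cnt_le. Qed.
Lemma w1_le : w1 <= u2. Proof. exact: cnt_anti. Qed.
Lemma w2_le : w2 <= w1. Proof. exact: cnt_anti. Qed.

Lemma w1_ge : m.-1 <= w1.
Proof.
have := rk_le 4 1; rewrite /rk.
have -> : count (fun a => 4 <= a) (drop 1 l) = size (drop 1 l).
  apply/eqP; rewrite -all_count; apply/(all_nthP 0) => j.
  rewrite size_drop nth_drop => Hj; apply: Lge4; lia.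
rewrite size_drop /w1; lia.
Qed.

Lemma Pw_le : Pw <= k.
Proof. have := u2_le; rewrite /Pw; lia. Qed.

Lemma g1_le1 : Pw + g1 <= k.
Proof. have := Pw_le; rewrite /g1; lia. Qed.

Lemma g1_le2 : g1 <= NN.
Proof. rewrite /g1; lia. Qed.

Lemma Pb_le : Pb <= k + 2 * m.
Proof. have := g1_le1; have := w1_le; have := w2_le; have := u2_le; rewrite /Pb; lia. Qed.

Lemma Pint_inj i p i' p' : i < m -> 0 < p < L i -> i' < m -> 0 < p' < L i' ->
  Pint i p = Pint i' p' -> i = i' /\ p = p'.
Proof.
move=> Hi Hp Hi' Hp'.
have := g1_le2; have HPb : Pb = Pw + g1 + w1 + w2 by [].
have Hss : ss = NN - g1 by [].
have HPw : Pw = m + 2 + u2 by [].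
case: (PintP Hi Hp); case: (PintP Hi' Hp') => *; try lia.
all: first [ apply: beta_inj; lia
           | (have Ei : i = i' by apply: (rk_eq (c:=3)); lia); subst i'; lia
           | (have Ei : i = i' by apply: (rk_eq (c:=4)); lia); subst i'; lia
           | (have Ei : i = i' by apply: (rk_eq (c:=5)); lia); subst i'; lia ].
Qed.

Local Notation V := (theta_vertex l).
Local Notation ITV := ({i : 'I_m & 'I_(L i).-1}).

Lemma tagP (t : ITV) : 0 < (tagged t).+1 < L (tag t).
Proof. by have := ltn_ord (tagged t); lia. Qed.

Lemma tagged_eq (t t' : ITV) :
  (tag t : nat) = tag t' -> (tagged t : nat) = tagged t' -> t = t'.
Proof.
case: t => i j; case: t' => i' j' /= /val_inj Ei; subst i'.
by move=> /val_inj ->.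
Qed.

Lemma PPint_range i p : i < m -> 0 < p < L i -> 2 <= Pint i p <= Pb + ss /\ Pint i p != Pw.
Proof.
move=> Hi Hp.
have := g1_le2; have HPb : Pb = Pw + g1 + w1 + w2 by [].
have Hss : ss = NN - g1 by [].
have HPw : Pw = m + 2 + u2 by [].
by case: (PintP Hi Hp) => *; split; lia.
Qed.

Lemma ijP (i : 'I_m) (j : 'I_(L i).-1) : 0 < j.+1 < L i.
Proof. by have := ltn_ord j; lia. Qed.

Lemma PP_range x : 0 < PP x <= Pb + ss.
Proof.
case: x => [[]|[i j]] /=.
- have := g1_le2; rewrite /Pb /ss /Pw; lia.
- have := g1_le2; rewrite /Pb /ss /Pw; lia.
- by have [/andP [Ha Hb] _] := PPint_range (ltn_ord i) (ijP j); apply/andP; split; lia.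
Qed.

Lemma PP_inj : injective PP.
Proof.
have HPw : 1 < Pw by rewrite /Pw; lia.
case=> [[]|[i j]] [[]|[i' j']] //=; try lia.
- by have [/andP [Ha Hb] _] := PPint_range (ltn_ord i') (ijP j'); lia.
- by have [_ /eqP H] := PPint_range (ltn_ord i') (ijP j'); move=> E; case: H.
- by have [/andP [Ha Hb] _] := PPint_range (ltn_ord i) (ijP j); lia.
- by have [_ /eqP H] := PPint_range (ltn_ord i) (ijP j); move=> E; case: H.
- move=> E; have [/val_inj Ei Ep] := Pint_inj (ltn_ord _) (ijP j) (ltn_ord _) (ijP j') E.
  subst i'; have -> // : j = j' by apply: ord_inj; lia.
Qed.

Lemma sum_pred (s : seq nat) : all (fun a => 2 <= a) s ->
  sumn (map predn s) = size s + count (fun a => 3 <= a) s + count (fun a => 4 <= a) s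
     + count (fun a => 5 <= a) s + sumn (map bl s).
Proof.
elim: s => //= a s IH /andP [Ha Hs']; rewrite IH //.
case: a Ha => [|[|[|[|[|[|a]]]]]] //= _; rewrite /bl; lia.
Qed.

Lemma card_V : #|V| = Pb + ss.
Proof.
rewrite card_sum card_bool card_tagged.
have -> : [seq #|'I_(L i).-1| | i : 'I_m <- enum 'I_m] = map predn l.
  transitivity [seq (nth 0 l j).-1 | j <- map val (enum 'I_m)].
    by rewrite -map_comp; apply: eq_map => i /=; rewrite card_ord.
  by rewrite val_enum_ord -{3}(mkseq_nth 0 l) /mkseq -map_comp.
rewrite sum_pred; last by apply/(all_nthP 0) => i Hi; apply: Lge2.
have := g1_le2; rewrite /Pb /ss /Pw /u2 /w1 /w2 /cnt /NN; lia.
Qed.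

Definition pi (t : ITV) : nat := tag t.
Definition pp (t : ITV) : nat := (tagged t).+1.

Lemma pi_lt t : pi t < m. Proof. exact: ltn_ord. Qed.
Lemma ppP t : 0 < pp t < L (pi t). Proof. by case: t => i j; exact: ijP. Qed.
Lemma PP_int t : PP (inr t) = Pint (pi t) (pp t). Proof. by []. Qed.
Lemma int_eq t t' : pi t = pi t' -> pp t = pp t' -> t = t'.
Proof. by move=> E1 E2; apply: tagged_eq => //; rewrite /pp in E2; lia. Qed.

Lemma pos_int i0 t : theta_pos i0 (inr t) = if tag t == i0 then Some (pp t) else None.
Proof. by []. Qed.

Lemma adj_ii t t' : (@theta_adj l) (inr t) (inr t') ->
  pi t = pi t' /\ ((pp t).+1 = pp t' \/ (pp t').+1 = pp t).
Proof.
case/existsP => i0; rewrite !pos_int.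
case: eqP => // E1; case: eqP => // E2 /orP [/eqP H|/eqP H].
  by split; [rewrite /pi E1 E2 | left].
by split; [rewrite /pi E1 E2 | right].
Qed.

Lemma adj_ui t : (@theta_adj l) (inl true) (inr t) -> pp t = 1.
Proof. by case/existsP => i0; rewrite pos_int /=; case: eqP => // _; case: (pp t) => [|[|n]] //=. Qed.

Lemma adj_iu t : (@theta_adj l) (inr t) (inl true) -> pp t = 1.
Proof. by case/existsP => i0; rewrite pos_int /=; case: eqP => // _; case: (pp t) => [|[|n]] //=. Qed.

Lemma adj_wi t : (@theta_adj l) (inl false) (inr t) -> (pp t).+1 = L (pi t).
Proof.
case/existsP => i0; rewrite pos_int /=; case: eqP => // E /orP [/eqP H|/eqP H].
  by have := ppP t; rewrite /pi E; lia.
by rewrite /pi E.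
Qed.

Lemma adj_iw t : (@theta_adj l) (inr t) (inl false) -> (pp t).+1 = L (pi t).
Proof.
case/existsP => i0; rewrite pos_int /=; case: eqP => // E /orP [/eqP H|/eqP H].
  by rewrite /pi E.
by have := ppP t; rewrite /pi E; lia.
Qed.

Lemma adj_uw : ~~ (@theta_adj l) (inl true) (inl false).
Proof.
apply/existsP => -[i0] /= H; have H2 := Lge2 (ltn_ord i0); move: H H2; case: (nth 0 l i0) => [|[|n]] //=.
Qed.

Lemma adj_wu : ~~ (@theta_adj l) (inl false) (inl true).
Proof.
apply/existsP => -[i0] /= H; have H2 := Lge2 (ltn_ord i0); move: H H2; case: (nth 0 l i0) => [|[|n]] //=.
Qed.

Lemma adj_uu : ~~ (@theta_adj l) (inl true) (inl true).
Proof. by apply/existsP => -[i0] /=. Qed.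

Lemma adj_ww : ~~ (@theta_adj l) (inl false) (inl false).
Proof. by apply/existsP => -[i0] /=; case/orP => /eqP; lia. Qed.

Lemma adj_sym (x y : V) : theta_adj x y = theta_adj y x.
Proof.
apply: eq_existsb => i0.
by case: (theta_pos i0 x) => [a|]; case: (theta_pos i0 y) => [b|] //; rewrite orbC.
Qed.

Local Notation G := (graph_square (@theta_adj l)).

Lemma sq_sym x y : G x y = G y x.
Proof.
rewrite /graph_square eq_sym adj_sym; congr (_ && (_ || _)).
by apply: eq_existsb => z; rewrite andbC !(adj_sym z).
Qed.

Lemma sq_irr x : ~~ G x x.
Proof. by rewrite /graph_square eqxx. Qed.

Lemma sq_ii t t' : G (inr t) (inr t') ->
  (pi t = pi t' /\ pp t <= pp t' + 2 /\ pp t' <= pp t + 2) \/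
  (pp t = 1 /\ pp t' = 1) \/ ((pp t).+1 = L (pi t) /\ (pp t').+1 = L (pi t')).
Proof.
case/andP => _ /orP [/adj_ii [E H]|/existsP [z /andP [Ha Hb]]]; first by left; lia.
case: z Ha Hb => [[]|z] Ha Hb.
- right; left; split; [exact: adj_iu Ha | exact: adj_ui Hb].
- right; right; split; [exact: adj_iw Ha | exact: adj_wi Hb].
- left; have [E1 H1'] := adj_ii Ha; have [E2 H2'] := adj_ii Hb; lia.
Qed.

Lemma sq_ui t : G (inl true) (inr t) -> pp t <= 2.
Proof.
case/andP => _ /orP [/adj_ui -> //|/existsP [z /andP [Ha Hb]]].
case: z Ha Hb => [[]|z] Ha Hb.
- by rewrite (negbTE adj_uu) in Ha.
- by rewrite (negbTE adj_uw) in Ha.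
- have := adj_ui Ha; have [E H] := adj_ii Hb; have := ppP t; lia.
Qed.

Lemma sq_wi t : G (inl false) (inr t) -> L (pi t) <= pp t + 2.
Proof.
case/andP => _ /orP [/adj_wi <- //|/existsP [z /andP [Ha Hb]]]; first lia.
case: z Ha Hb => [[]|z] Ha Hb.
- by rewrite (negbTE adj_wu) in Ha.
- by rewrite (negbTE adj_ww) in Ha.
- have := adj_wi Ha; have [E H] := adj_ii Hb; rewrite E; lia.
Qed.

Definition onpath i a b (y : V) : bool :=
  if y is inr t then (pi t == i) && (a <= pp t) && (pp t <= b) else false.
Definition q1 (y : V) : bool :=
  if y is inr t then (pp t).+1 == L (pi t) else false.

Lemma card_onpath i a b : #|[pred y | onpath i a b y]| <= b.+1 - a.
Proof.
rewrite -(size_iota a (b.+1 - a)).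
apply: (card_inj_le (f := fun y : V => if y is inr t then pp t else 0)).
  move=> [[]|t] [[]|t'] //; rewrite !inE /= => /andP [/andP [/eqP E1 _] _] /andP [/andP [/eqP E2 _] _] E.
  by rewrite (@int_eq t t') //; rewrite E1 E2.
move=> [[]|t] //; rewrite inE /= mem_iota => /andP [/andP [_ Ha] Hb]; lia.
Qed.

Lemma card_q1 : #|[pred y | q1 y]| <= m.
Proof.
rewrite -(size_iota 0 m).
apply: (card_inj_le (f := fun y : V => if y is inr t then pi t else 0)).
  move=> [[]|t] [[]|t'] //; rewrite !inE /= => /eqP E1 /eqP E2 E.
  by rewrite (@int_eq t t') //; move: E1 E2; rewrite E; lia.
move=> [[]|t] //; rewrite inE /= mem_iota => _; have := pi_lt t; lia.
Qed.

Lemma card_PP a b : #|[pred y | a < PP y <= b]| <= b - a.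
Proof.
rewrite -(size_iota a.+1 (b - a)).
apply: (card_inj_le (f := PP)); first by move=> x y _ _; exact: PP_inj.
by move=> y; rewrite inE mem_iota => /andP [Ha Hb]; apply/andP; split; lia.
Qed.

Lemma PP_lo2 t : pp t <= 2 -> Pint (pi t) (pp t) < Pw.
Proof.
move=> Hp; have := u2_le; rewrite /Pw.
by case: (PintP (pi_lt t) (ppP t)) => *; lia.
Qed.

Lemma PP_q2 t : 3 <= pp t -> L (pi t) <= pp t + 2 -> Pw + g1 < Pint (pi t) (pp t) <= Pb.
Proof.
move=> Hp HL; have HPb : Pb = Pw + g1 + w1 + w2 by [].
by case: (PintP (pi_lt t) (ppP t)) => *; apply/andP; split; lia.
Qed.

Lemma PP_body t : 3 <= pp t -> pp t + 3 <= L (pi t) ->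
  (Pw < Pint (pi t) (pp t) <= Pw + g1) \/
  (pre (pi t) + (pp t - 3) < ss /\ Pint (pi t) (pp t) = Pb + (ss - (pre (pi t) + (pp t - 3)))).
Proof.
move=> Hp HL; have := g1_le2; have Hss : ss = NN - g1 by [].
by case: (PintP (pi_lt t) (ppP t)) => *; try lia; left; apply/andP; split; lia.
Qed.

Lemma PP_le_Pb_or t : Pint (pi t) (pp t) <= Pb \/
  (3 <= pp t /\ pp t + 3 <= L (pi t) /\ pre (pi t) + (pp t - 3) < ss /\
   Pint (pi t) (pp t) = Pb + (ss - (pre (pi t) + (pp t - 3)))).
Proof. have := g1_le2; have Hss : ss = NN - g1 by [].
have HPb : Pb = Pw + g1 + w1 + w2 by [].
have := u2_le; have HPw : Pw = m + 2 + u2 by [].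
by case: (PintP (pi_lt t) (ppP t)) => *; lia.
Qed.

Lemma k_gt0 : 0 < k. Proof. lia. Qed.

Lemma Bnd_bounds x : PP x <= Bnd k PP x < PP x + k.
Proof.
rewrite /Bnd /blk; have := PP_range x; have := ltn_ceil (PP x).-1 k_gt0.
have := leq_divM (PP x).-1 k; move: ((PP x).-1 %/ k) => q.
move=> H2 H3 /andP [H4 _]; apply/andP; split; nia.
Qed.

Lemma Bnd_small x : PP x <= k -> Bnd k PP x = k.
Proof.
move=> H; rewrite /Bnd /blk divn_small ?muln1 //; have := PP_range x; lia.
Qed.

Lemma Bnd_mid x : k < PP x <= 2 * k -> Bnd k PP x = 2 * k.
Proof.
move=> /andP [Ha Hb]; rewrite /Bnd /blk.
have E1 : 1 <= (PP x).-1 %/ k by rewrite leq_divRL ?k_gt0 //; lia.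
have E2 : (PP x).-1 %/ k < 2 by rewrite ltn_divLR ?k_gt0 //; lia.
have -> : (PP x).-1 %/ k = 1 by lia.
lia.
Qed.

Definition Cond x := #|[pred y | G x y & Bnd k PP x < PP y]| + (Bnd k PP x - PP x) < k.

Lemma cond_small x : PP x <= k ->
  #|[pred y | G x y & k < PP y]| < PP x -> Cond x.
Proof. by move=> H1' H2'; rewrite /Cond Bnd_small //; lia. Qed.

Lemma cond_mid x : k < PP x <= 2 * k ->
  #|[pred y | G x y & 2 * k < PP y]| < PP x - k -> Cond x.
Proof. by move=> H1' H2'; rewrite /Cond Bnd_mid //; move/andP: H1'; lia. Qed.

Lemma bad_le x B (S : pred V) n : (forall y, G x y -> B < PP y -> S y) -> #|S| <= n ->
  #|[pred y | G x y & B < PP y]| <= n.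
Proof. by move=> H Hn; apply: leq_trans Hn; apply: subset_leq_card; apply/subsetP => y; rewrite inE => /andP [Ha Hb]; exact: H. Qed.

Lemma uw_notbad b B : k <= B -> B < PP (inl b) -> False.
Proof. by have := Pw_le; case: b => /=; lia. Qed.

Lemma hi_pp3 t B : Pw <= B -> B < Pint (pi t) (pp t) -> 3 <= pp t.
Proof. by move=> H1' H2'; case: (leqP 3 (pp t)) => // H; have := PP_lo2 (t := t); lia. Qed.

Lemma G_iu t : G (inr t) (inl true) -> pp t <= 2.
Proof. by rewrite sq_sym => /sq_ui. Qed.

Lemma G_iw t : G (inr t) (inl false) -> L (pi t) <= pp t + 2.
Proof. by rewrite sq_sym => /sq_wi. Qed.

Lemma cond_u : Cond (inl true).
Proof.
apply: cond_small => /=; first lia.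
apply: (leq_ltn_trans (bad_le (S := pred0) (n := 0) _ _)) => //; last by rewrite card0.
move=> [[]|t] Hg Hb /=.
- by rewrite (negbTE (sq_irr _)) in Hg.
- by have := Pw_le; move: Hb => /=; lia.
- by rewrite PP_int in Hb; have := sq_ui Hg; have := PP_lo2 (t := t); have := Pw_le; lia.
Qed.

Lemma cond_w : Cond (inl false).
Proof.
apply: cond_small => /=; first exact: Pw_le.
apply: (leq_ltn_trans (bad_le (S := [pred y | Pw + g1 < PP y <= Pb]) (n := Pb - (Pw + g1)) _ _)).
- move=> [[]|t] Hg Hb.
  + by move: Hb => /=; lia.
  + by rewrite (negbTE (sq_irr _)) in Hg.
  + rewrite PP_int in Hb; apply/andP; rewrite PP_int.
    have HL := sq_wi Hg; have Hp := hi_pp3 Pw_le Hb.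
    by apply/andP; exact: PP_q2.
- exact: card_PP.
- have := w1_le; have := w2_le; have := u2_le; rewrite /= /Pb /Pw; lia.
Qed.

Lemma i0_of t : L (pi t) <= 3 -> pi t = 0.
Proof.
move=> H; case: (posnP (pi t)) => // Hp.
by have := Lge4 Hp (pi_lt t); lia.
Qed.

Lemma cond_C1 t : pp t = 1 -> Cond (inr t).
Proof.
move=> Hp; have Hi := pi_lt t.
have HPx : PP (inr t) = 1 + (m - pi t) by rewrite PP_int /Pint Hp.
have HPw := Pw_le; have HPw' : Pw = m + 2 + u2 by [].
apply: cond_small; first by rewrite HPx; lia.
case: (ltnP 2 (L (pi t))) => HL.
- apply: (leq_ltn_trans (bad_le (S := [pred y | onpath (pi t) 3 3 y]) (n := 1) _ _)).
  + move=> [b|t'] Hg Hb; first by case: (uw_notbad (leqnn k) Hb).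
    rewrite PP_int in Hb; have Hp' := hi_pp3 HPw Hb.
    case: (sq_ii Hg) => [[E [Ha Hb']]|[[_ Hp'']|[Hq _]]]; try lia.
    by rewrite /= E eqxx /=; apply/andP; split; lia.
  + exact: card_onpath.
  + by rewrite HPx; lia.
- have Ei := i0_of (leq_trans HL (leqnSn 2)).
  apply: (leq_ltn_trans (bad_le (S := [pred y | q1 y]) (n := m) _ _)).
  + move=> [b|t'] Hg Hb; first by case: (uw_notbad (leqnn k) Hb).
    rewrite PP_int in Hb; have Hp' := hi_pp3 HPw Hb.
    case: (sq_ii Hg) => [[E [Ha Hb']]|[[_ Hp'']|[Hq Hq']]]; try lia.
    * by have := ppP t'; rewrite -E; lia.
    * by rewrite /= Hq' eqxx.
  + exact: card_q1.
  + by rewrite HPx Ei; lia.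
Qed.

Lemma cond_C2 t : pp t = 2 -> Cond (inr t).
Proof.
move=> Hp; have Hi := pi_lt t.
have HL3 : 3 <= L (pi t) by have := ppP t; lia.
have HPx : PP (inr t) = 1 + m + rk 3 (pi t) by rewrite PP_int /Pint Hp.
have Hrk := rk_pos Hi HL3; have Hrk2 : rk 3 (pi t) <= u2 := rk_le _ _.
have HPw := Pw_le; have HPw' : Pw = m + 2 + u2 by [].
apply: cond_small; first by rewrite HPx; lia.
case: (ltnP 3 (L (pi t))) => HL.
- apply: (leq_ltn_trans (bad_le (S := [pred y | onpath (pi t) 3 4 y]) (n := 2) _ _)).
  + move=> [b|t'] Hg Hb; first by case: (uw_notbad (leqnn k) Hb).
    rewrite PP_int in Hb; have Hp' := hi_pp3 HPw Hb.
    case: (sq_ii Hg) => [[E [Ha Hb']]|[[Hp'' _]|[Hq _]]]; try lia.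
    by rewrite /= E eqxx /=; apply/andP; split; lia.
  + exact: card_onpath.
  + by rewrite HPx; lia.
- apply: (leq_ltn_trans (bad_le (S := [pred y | q1 y]) (n := m) _ _)).
  + move=> [b|t'] Hg Hb; first by case: (uw_notbad (leqnn k) Hb).
    rewrite PP_int in Hb; have Hp' := hi_pp3 HPw Hb.
    case: (sq_ii Hg) => [[E [Ha Hb']]|[[Hp'' _]|[Hq Hq']]]; try lia.
    * by have := ppP t'; rewrite -E; lia.
    * by rewrite /= Hq' eqxx.
  + exact: card_q1.
  + by rewrite HPx; lia.
Qed.

Lemma card_or (A B : pred V) :
  #|[pred y | A y || B y]| <= #|[pred y | A y]| + #|[pred y | B y]|.
Proof.
rewrite -cardUI; apply: leq_trans (leq_addr _ _).
by apply: subset_leq_card; apply/subsetP => y; rewrite !inE.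
Qed.

Lemma sumn_bl0 (s : seq nat) : count (fun a => 4 <= a) s = 0 -> sumn (map bl s) = 0.
Proof.
elim: s => //= a s IH H; rewrite IH; last by lia.
by rewrite /bl; move: H; case: (leqP 4 a) => /= Ha; lia.
Qed.

Lemma rk_one i : i < m -> 4 <= L i -> rk 4 i = 1 -> pre i.+1 = NN.
Proof.
move=> Hi HL; rewrite rk_S // HL => /= [[H]].
rewrite /NN -(cat_take_drop i.+1 l) map_cat sumn_cat -/(pre i.+1).
by rewrite sumn_bl0 ?addn0.
Qed.

Lemma u2_ge : m.-1 <= u2.
Proof. by have := w1_ge; have := w1_le; lia. Qed.

Lemma cond_C3 t : 3 <= pp t -> (pp t).+1 = L (pi t) -> Cond (inr t).
Proof.
move=> Hp HL; have Hi := pi_lt t.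
have HPx : PP (inr t) = Pw + g1 + rk 4 (pi t).
  by rewrite PP_int; case: (PintP (pi_lt t) (ppP t)) => *; lia.
have Hrk := rk_pos (c := 4) Hi (ltac:(lia)); have Hrk2 : rk 4 (pi t) <= w1 := rk_le _ _.
have HPw := Pw_le; have HPw' : Pw = m + 2 + u2 by [].
have Hg1 := g1_le1; have HPb := Pb_le; have HPb' : Pb = Pw + g1 + w1 + w2 by [].
have := u2_ge; have := w1_ge; have := w2_le => *.
case: (leqP (PP (inr t)) k) => Hsm.
- apply: cond_small => //.
  apply: (leq_ltn_trans (bad_le (S := [pred y | onpath (pi t) (pp t - 2) (pp t) y || q1 y]) (n := 3 + m) _ _)).
  + move=> [b|t'] Hg Hb; first by case: (uw_notbad (leqnn k) Hb).
    rewrite PP_int in Hb; have Hp' := hi_pp3 HPw Hb.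
    case: (sq_ii Hg) => [[E [Ha Hb']]|[[Hp'' _]|[Hq Hq']]]; try lia.
    * apply/orP; left; rewrite /onpath E eqxx /=; have := ppP t'; rewrite -E -HL.
      by move=> /andP [_ H3]; apply/andP; split; lia.
    * by apply/orP; right; rewrite /= Hq' eqxx.
  + apply: leq_trans (card_or _ _) (leq_trans (leq_add (card_onpath _ _ _) card_q1) _); lia.
  + by rewrite HPx; lia.
- have Hmid : k < PP (inr t) <= 2 * k by apply/andP; split; lia.
  apply: cond_mid => //.
  have Hbad y : G (inr t) y -> 2 * k < PP y ->
     exists t', [/\ y = inr t', pi t' = pi t, pp t' = pp t - 2,
       pre (pi t) + (pp t' - 3) < ss & 2 * k < Pb + (ss - (pre (pi t) + (pp t' - 3)))].
    case: y => [b|t'] Hg Hb; first by case: (uw_notbad (ltac:(lia) : k <= 2 * k) Hb).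
    rewrite PP_int in Hb; case: (PP_le_Pb_or t') => [|[H3 [H4 [H5 H6]]]]; first lia.
    case: (sq_ii Hg) => [[E [Ha Hb']]|[[Hp'' _]|[Hq Hq']]]; try lia.
    rewrite -E in H4 H5 H6 Hb; exists t'; split => //; first lia.
    by rewrite -H6.
  case: (ltnP (k.+1) (PP (inr t))) => Hk1.
  + apply: (leq_ltn_trans (bad_le (S := [pred y | onpath (pi t) (pp t - 2) (pp t - 2) y]) (n := 1) _ _)).
    * move=> y Hg Hb; have [t' [-> E1 E2 _ _]] := Hbad y Hg Hb.
      rewrite /=; apply/andP; split; [apply/andP; split|]; [apply/eqP; lia|lia|lia].
    * by apply: leq_trans (card_onpath _ _ _) _; lia.
    * lia.
  + apply: (leq_ltn_trans (bad_le (S := pred0) (n := 0) _ _)); [|by rewrite card0|lia].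
    move=> y Hg Hb; have [t' [-> E1 E2 E3 E4]] := Hbad y Hg Hb.
    have Hss : ss = NN - g1 by [].
    have Hg1' : g1 = minn (k - Pw) NN by [].
    case: (leqP NN (k - Pw)) => Hgg.
    * lia.
    * have Hr1 : rk 4 (pi t) = 1 by lia.
      have := rk_one Hi (ltac:(lia)) Hr1; rewrite pre_S // /bl => E5.
      move: E4; lia.
Qed.

Lemma cond_C4 t : 3 <= pp t -> (pp t).+2 = L (pi t) -> Cond (inr t).
Proof.
move=> Hp HL; have Hi := pi_lt t.
have HPx : PP (inr t) = Pw + g1 + w1 + rk 5 (pi t).
  by rewrite PP_int; case: (PintP (pi_lt t) (ppP t)) => *; lia.
have Hrk := rk_pos (c := 5) Hi (ltac:(lia)); have Hrk2 : rk 5 (pi t) <= w2 := rk_le _ _.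
have HPw := Pw_le; have HPw' : Pw = m + 2 + u2 by [].
have Hg1 := g1_le1; have HPb := Pb_le; have HPb' : Pb = Pw + g1 + w1 + w2 by [].
have := u2_ge; have := w1_ge; have := w2_le => *.
case: (leqP (PP (inr t)) k) => Hsm.
- apply: cond_small => //.
  apply: (leq_ltn_trans (bad_le (S := [pred y | onpath (pi t) (pp t - 2) (pp t + 1) y]) (n := 4) _ _)).
  + move=> [b|t'] Hg Hb; first by case: (uw_notbad (leqnn k) Hb).
    case: (sq_ii Hg) => [[E [Ha Hb']]|[[Hp'' _]|[Hq Hq']]]; try lia.
    have := ppP t'; rewrite -E -HL => /andP [_ H3].
    rewrite /=; apply/andP; split; [apply/andP; split|]; [apply/eqP; lia|lia|lia].
  + by apply: leq_trans (card_onpath _ _ _) _; lia.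
  + by rewrite HPx; lia.
- have Hmid : k < PP (inr t) <= 2 * k by apply/andP; split; lia.
  apply: cond_mid => //.
  have Hbad y : G (inr t) y -> 2 * k < PP y ->
     exists t', [/\ y = inr t', pi t' = pi t, pp t - 2 <= pp t' <= pp t - 1 &
       pre (pi t) + (pp t' - 3) < ss].
    case: y => [b|t'] Hg Hb; first by case: (uw_notbad (ltac:(lia) : k <= 2 * k) Hb).
    rewrite PP_int in Hb; case: (PP_le_Pb_or t') => [|[H3 [H4 [H5 H6]]]]; first lia.
    case: (sq_ii Hg) => [[E [Ha Hb']]|[[Hp'' _]|[Hq Hq']]]; try lia.
    rewrite -E in H4 H5 H6 Hb; exists t'; split => //.
    by apply/andP; split; lia.
  have Hss : ss = NN - g1 by [].
  have Hg1' : g1 = minn (k - Pw) NN by [].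
  case: (leqP NN (k - Pw)) => Hgg.
  + apply: (leq_ltn_trans (bad_le (S := pred0) (n := 0) _ _)); [|by rewrite card0|lia].
    move=> y Hg Hb; have [t' [-> E1 E2 E3]] := Hbad y Hg Hb; lia.
  + apply: (leq_ltn_trans (bad_le (S := [pred y | onpath (pi t) (pp t - 2) (pp t - 1) y]) (n := 2) _ _)).
    * move=> y Hg Hb; have [t' [-> E1 /andP [E2 E2'] _]] := Hbad y Hg Hb.
      rewrite /=; apply/andP; split; [apply/andP; split|]; [apply/eqP; lia|lia|lia].
    * by apply: leq_trans (card_onpath _ _ _) _; lia.
    * lia.
Qed.

Lemma cond_C5 t : 3 <= pp t -> pp t + 3 <= L (pi t) ->
  ss <= pre (pi t) + (pp t - 3) -> pre (pi t) + (pp t - 3) < NN -> Cond (inr t).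
Proof.
move=> Hp HL Hb1 Hb2; have Hi := pi_lt t.
have HPx : PP (inr t) = Pw + (NN - (pre (pi t) + (pp t - 3))).
  by rewrite PP_int; case: (PintP (pi_lt t) (ppP t)) => *; lia.
have HPw := Pw_le; have HPw' : Pw = m + 2 + u2 by [].
have Hg1 := g1_le1; have Hss : ss = NN - g1 by []; have := g1_le2 => ?.
apply: cond_small; first by rewrite HPx; lia.
apply: (leq_ltn_trans (bad_le (S := [pred y | onpath (pi t) (pp t - 2) (pp t + 2) y]) (n := 5) _ _)).
+ move=> [b|t'] Hg Hb; first by case: (uw_notbad (leqnn k) Hb).
  case: (sq_ii Hg) => [[E [Ha Hb']]|[[Hp'' _]|[Hq Hq']]]; try lia.
  rewrite /=; apply/andP; split; [apply/andP; split|]; [apply/eqP; lia|lia|lia].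
+ by apply: leq_trans (card_onpath _ _ _) _; lia.
+ by rewrite HPx; lia.
Qed.

Lemma cond_C6 t : 3 <= pp t -> pp t + 3 <= L (pi t) ->
  pre (pi t) + (pp t - 3) < ss -> Cond (inr t).
Proof.
move=> Hp HL Hb1; have Hi := pi_lt t.
have HPx : PP (inr t) = Pb + (ss - (pre (pi t) + (pp t - 3))).
  by rewrite PP_int; case: (PintP (pi_lt t) (ppP t)) => *; lia.
have HPw := Pw_le; have HPw' : Pw = m + 2 + u2 by [].
have HPb' : Pb = Pw + g1 + w1 + w2 by [].
have := Bnd_bounds (inr t); rewrite HPx => /andP [HB1 HB2].
rewrite /Cond HPx.
set B := Bnd k PP (inr t) in HB1 HB2 *.
set V0 := Pb + (ss - (pre (pi t) + (pp t - 3))) in HPx HB1 HB2 *.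
suff : #|[pred y | G (inr t) y & B < PP y]| <= V0 + 2 - B by lia.
apply: (bad_le (S := [pred y | B < PP y <= V0 + 2])); last exact: card_PP.
move=> [b|t'] Hg Hb.
- by move: Hb; have := u2_le; clear Hg; case: b => /=; lia.
- apply/andP; split => //; move: Hb; rewrite PP_int => Hb.
  case: (PP_le_Pb_or t') => [|[H3 [H4 [H5 H6]]]]; first lia.
  case: (sq_ii Hg) => [[E [Ha Hb']]|[[Hp'' _]|[Hq Hq']]]; try lia.
  rewrite -E in H4 H5 H6 Hb *; rewrite H6; rewrite H6 in Hb; lia.
Qed.

Lemma cond_all x : Cond x.
Proof.
case: x => [[]|t]; [exact: cond_u | exact: cond_w |].
have := ppP t => /andP [Hp0 HpL].
case: (ltngtP (pp t) 2) => Hp.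
- by apply: cond_C1; lia.
- case: (eqVneq (pp t).+1 (L (pi t))) => [E3|N3]; first by apply: cond_C3.
  case: (eqVneq (pp t).+2 (L (pi t))) => [E4|N4]; first by apply: cond_C4.
  have HL3 : pp t + 3 <= L (pi t) by move: N3 N4 => /eqP N3 /eqP N4; lia.
  case: (leqP ss (pre (pi t) + (pp t - 3))) => Hb.
  + by apply: cond_C5 => //; apply: beta_NN => //; exact: pi_lt.
  + exact: cond_C6.
- exact: cond_C2.
Qed.

Lemma main_sec : equitably_k_choosable (graph_square (@theta_adj l)) k.
Proof.
apply: (GL_main (P := PP)).
- exact: k_gt0.
- by move=> x y; rewrite sq_sym.
- exact: sq_irr.
- exact: PP_inj.
- by move=> x; have := PP_range x => /andP [].
- by move=> x; rewrite card_V; have := PP_range x => /andP [].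
- exact: cond_all.
Qed.

End Theta.

Theorem lemma3p3 (l : seq nat) :
  3 <= size l -> sorted leq l ->
  2 <= nth 0 l 0 -> 4 <= nth 0 l 1 ->
  forall k : nat, 2 * size l + 2 <= k ->
    equitably_k_choosable (graph_square (@theta_adj l)) k.
Proof. by move=> Hm Hs H0 H1 k Hk; apply: main_sec. Qed.
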